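(* Let $\breve{\mathcal{X}}_k\subset\mathbb{R}^n$ and $\mathcal{X}^{\rm F}_k\subset\mathbb{R}^n$ be constrained zonotopes and let $\check{\mathcal{X}}_k=\breve{\mathcal{X}}_k\cap_{I_n}\mathcal{X}^{\rm F}_k$. Let $g:\mathbb{R}^n\to\mathbb{R}^{m_c}$, let $\check{\mathcal{P}}_k\supseteq\check{\mathcal{X}}_k$ be a convex polytope, and suppose $g=g^{\rm a}-g^{\rm b}$ on $\check{\mathcal{P}}_k$ where $g^{\rm a},g^{\rm b}$ are differentiable and componentwise convex on $\check{\mathcal{P}}_k$. Let $\bar x\in\check{\mathcal{P}}_k$, $H=\nabla_xg(\bar x)$, and define $\bar g(x)=g(\bar x)+H(x-\bar x)$, $\bar g^{\rm a}(x)=g^{\rm a}(\bar x)+\nabla g^{\rm a}(\bar x)(x-\bar x)$, $\bar g^{\rm b}(x)=g^{\rm b}(\bar x)+\nabla g^{\rm b}(\bar x)(x-\bar x)$. For $i=1,\ldots,m_c$ let $$e^-_i=\min_{x\in\mathrm{vert}(\check{\mathcal{P}}_k)}\big(\bar g^{\rm a}_i(x)-g^{\rm b}_i(x)-\bar g_i(x)\big),\qquad e^+_i=\max_{x\in\mathrm{vert}(\check{\mathcal{P}}_k)}\big(g^{\rm a}_i(x)-\bar g^{\rm b}_i(x)-\bar g_i(x)\big),$$ and let $\mathcal{R}_k$ be the zonotope $\{\mathrm{diag}(\tfrac12(e^+-e^-)),\tfrac12(e^-+e^+)\}$ (the box $[e^-,e^+]$). Define $\mathcal{C}_k=\big(-g(\bar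 x)+H\bar x\big)\oplus(-\mathcal{R}_k)$. Then $$\{x\in\check{\mathcal{X}}_k:\ g(x)=0_{m_c\times1}\}\subseteq\tilde{\mathcal{X}}_k:=\check{\mathcal{X}}_k\cap_H\mathcal{C}_k,$$ and $\tilde{\mathcal{X}}_k$ is a constrained zonotope.
   Context: A constrained zonotope (CZ) is a set $\{G,c,A,b\}=\{G\xi+c:\xi\in[-1,1]^{n_g},\ A\xi=b\}$; a zonotope $\{G,c\}$ has no equality constraints. $\oplus$ is Minkowski sum (vectors treated as singletons), $-\mathcal{X}=\{-x:x\in\mathcal{X}\}$. The generalized intersection is $\mathcal{X}\cap_M\mathcal{W}=\{x\in\mathcal{X}:Mx\in\mathcal{W}\}$; $I_n$ is the $n\times n$ identity. $\mathrm{vert}(\mathcal{P})$ is the vertex set of the polytope $\mathcal{P}$. Vector-valued convexity is componentwise. *)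

(* Defs.v *)
(* Points of R^n are ROW vectors 'rV[R]_n, so that
   the library Jacobian 'J f p (with  'D_v f p = v *m 'J f p) can be used.
   Consequently a matrix M acting on x is written  x *m M  (the paper's M x). *)
From HB Require Import structures.
From mathcomp Require Import all_boot all_order all_algebra.
From mathcomp Require Import all_classical all_reals all_analysis.
Set Implicit Arguments. Unset Strict Implicit. Unset Printing Implicit Defensive.
Import Order.TTheory GRing.Theory Num.Theory.
Import numFieldNormedType.Exports.
Local Open Scope classical_set_scope.
Local Open Scope ring_scope.

Section Defs.
Variable R : realType.

Definition unit_box (ng : nat) (xi : 'rV[R]_ng) : Prop :=
  forall j : 'I_ng, -1 <= xi 0 j <= 1.

Definition cz_set (n ng nc : nat) (G : 'M[R]_(ng, n)) (c : 'rV[R]_n)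
    (A : 'M[R]_(ng, nc)) (b : 'rV[R]_nc) : set 'rV[R]_n :=
  [set x | exists xi : 'rV[R]_ng, unit_box xi /\ xi *m A = b /\ x = xi *m G + c].

Definition zono_set (n ng : nat) (G : 'M[R]_(ng, n)) (c : 'rV[R]_n) : set 'rV[R]_n :=
  [set x | exists xi : 'rV[R]_ng, unit_box xi /\ x = xi *m G + c].

Definition is_CZ (n : nat) (S : set 'rV[R]_n) : Prop :=
  exists (ng nc : nat) (G : 'M[R]_(ng, n)) (c : 'rV[R]_n)
         (A : 'M[R]_(ng, nc)) (b : 'rV[R]_nc), S = cz_set G c A b.

Definition msum_pt (n : nat) (p : 'rV[R]_n) (S : set 'rV[R]_n) : set 'rV[R]_n :=
  [set p + y | y in S].

Definition neg_set (n : nat) (S : set 'rV[R]_n) : set 'rV[R]_n :=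
  [set - y | y in S].

Definition gen_int (n m : nat) (X : set 'rV[R]_n) (M : 'M[R]_(n, m))
    (W : set 'rV[R]_m) : set 'rV[R]_n :=
  [set x | X x /\ W (x *m M)].

Definition conv_hull (n k : nat) (V : 'I_k -> 'rV[R]_n) : set 'rV[R]_n :=
  [set x | exists w : 'I_k -> R, (forall i, 0 <= w i) /\ \sum_(i < k) w i = 1
                                 /\ x = \sum_(i < k) w i *: V i].

Definition is_polytope (n : nat) (P : set 'rV[R]_n) : Prop :=
  exists (k : nat) (V : 'I_k -> 'rV[R]_n), P = conv_hull V.

Definition vert (n : nat) (P : set 'rV[R]_n) : set 'rV[R]_n :=
  [set x | P x /\ forall y z t, P y -> P z -> 0 < t < 1 ->
                  x = t *: y + (1 - t) *: z -> y = z].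

Definition convex_on_cw (n m : nat) (S : set 'rV[R]_n) (f : 'rV[R]_n -> 'rV[R]_m) : Prop :=
  forall (i : 'I_m) (x y : 'rV[R]_n) (t : R), S x -> S y -> 0 <= t <= 1 ->
    f (t *: x + (1 - t) *: y) 0 i <= t * f x 0 i + (1 - t) * f y 0 i.

Definition is_min_over (n : nat) (S : set 'rV[R]_n) (h : 'rV[R]_n -> R) (m : R) : Prop :=
  (exists v, S v /\ h v = m) /\ forall v, S v -> m <= h v.
Definition is_max_over (n : nat) (S : set 'rV[R]_n) (h : 'rV[R]_n -> R) (m : R) : Prop :=
  (exists v, S v /\ h v = m) /\ forall v, S v -> h v <= m.

Definition linz (n m : nat) (f : 'rV[R]_n -> 'rV[R]_m) (xbar x : 'rV[R]_n) : 'rV[R]_m :=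
  f xbar + (x - xbar) *m 'J f xbar.

End Defs.

(* Main.v *)
Require Import Defs.
From HB Require Import structures.
From mathcomp Require Import all_boot all_order all_algebra.
From mathcomp Require Import all_classical all_reals all_analysis.
From mathcomp Require Import lra.
Import Order.TTheory GRing.Theory Num.Theory.
Import numFieldNormedType.Exports.
Local Open Scope classical_set_scope.
Local Open Scope ring_scope.
Set Implicit Arguments. Unset Strict Implicit. Unset Printing Implicit Defensive.


Lemma tangent_le (R : realType) n m (P : set 'rV[R]_n) (f : 'rV[R]_n -> 'rV[R]_m) xbar x i :
  convex_on_cw P f -> P xbar -> P x -> differentiable f xbar ->
  f xbar 0 i + ((x - xbar) *m 'J f xbar) 0 i <= f x 0 i.
Proof.
move=> cf Pb Px df.
set v := x - xbar.
have D : 'D_v f xbar = v *m 'J f xbar := deriveEjacobian _ df.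
have dv : derivable f xbar v := @diff_derivable _ _ _ f xbar v df.
set q := fun h : R => h^-1 *: ((f \o shift xbar) (h *: v) - f xbar).
have c1 : q @ 0^' --> 'D_v f xbar := dv.
have c2 : (fun h => q h 0 i) @ 0^' --> ('D_v f xbar) 0 i.
  exact: (continuous_cvg _ (@coord_continuous R 1 m 0 i _)).
have c3 : (fun h => q h 0 i) @ 0^'+ --> ('D_v f xbar) 0 i.
  move=> A /c2; rewrite !near_simpl /= !near_withinE => HA.
  by apply: filterS HA => y Hy /gt_eqF/negbT; apply: Hy.
rewrite -D -lerBrDl.
apply: (cvgr_to_le c3).
near=> h.
have h0 : 0 < h by near: h; exact: nbhs_right_gt.
have h1 : h < 1 by near: h; exact: nbhs_right_lt.
rewrite /q /= mxE.
have E : h *: v + xbar = h *: x + (1 - h) *: xbar.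
  by rewrite /v scalerBr scalerBl scale1r -addrA [- _ + xbar]addrC.
rewrite E !mxE.
rewrite ler_pdivrMl //.
have := cf i x xbar h Px Pb.
rewrite (ltW h0) (ltW h1) => /(_ isT) H.
rewrite mulrBr; lra.
Unshelve. all: by end_near. Qed.

Section Conv.
Variable R : realType.

Definition cvx n (S : set 'rV[R]_n) := forall y z (t : R), S y -> S z -> 0 <= t <= 1 ->
  S (t *: y + (1 - t) *: z).

Lemma conv_comb_mem n (S : set 'rV[R]_n) : cvx S ->
  forall k (U : 'I_k -> 'rV[R]_n) (w : 'I_k -> R), (forall i, S (U i)) ->
  (forall i, 0 <= w i) -> \sum_i w i = 1 -> S (\sum_i w i *: U i).
Proof.
move=> cS; elim=> [|k IH] U w SU w0 w1.
  by move: w1; rewrite big_ord0 => /eqP; rewrite eq_sym oner_eq0.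
rewrite big_ord_recl; move: w1; rewrite big_ord_recl => w1.
set s := \sum_(i < k) w (lift ord0 i) in w1.
have s0 : 0 <= s by apply: sumr_ge0.
have [sz | snz] := eqVneq s 0.
  have wz := psumr_eq0P (fun i _ => w0 (lift ord0 i)) sz.
  rewrite big1 ?addr0; last by move=> i _; rewrite wz // scale0r.
  have -> : w ord0 = 1 by rewrite -w1 sz addr0.
  by rewrite scale1r.
have sp : 0 < s by rewrite lt_neqAle eq_sym snz s0.
have := IH (fun i => U (lift ord0 i)) (fun i => w (lift ord0 i) / s).
move=> /(_ (fun i => SU _) (fun i => divr_ge0 (w0 _) (ltW sp))).
rewrite -mulr_suml mulfV // => /(_ erefl) Sy.
have -> : \sum_(i < k) w (lift ord0 i) *: U (lift ord0 i) =
   (1 - w ord0) *: \sum_(i < k) (w (lift ord0 i) / s) *: U (lift ord0 i).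
  rewrite scaler_sumr; apply: eq_bigr => i _; rewrite scalerA.
  by rewrite -w1 addrC addKr mulrCA mulfV // mulr1.
apply: cS => //; apply/andP; split; first exact: w0.
by rewrite -w1 lerDl.
Qed.

Lemma conv_hull_cvx n k (V : 'I_k -> 'rV[R]_n) : cvx (conv_hull V).
Proof.
move=> y z t [a [a0 [a1 ->]]] [b [b0 [b1 ->]]] /andP[t0 t1].
exists (fun i => t * a i + (1 - t) * b i); split.
  by move=> i; apply: addr_ge0; apply: mulr_ge0 => //; rewrite subr_ge0.
split; first by rewrite big_split /= -!mulr_sumr a1 b1 !mulr1 addrC subrK.
rewrite !scaler_sumr -big_split /=; apply: eq_bigr => i _.
by rewrite !scalerA scalerDl.
Qed.

Lemma delta_in_hull n k (V : 'I_k -> 'rV[R]_n) i : conv_hull V (V i).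
Proof.
exists (fun l => (l == i)%:R); split; first by move=> l; rewrite ler0n.
split.
  rewrite (bigD1 i) //= eqxx big1 ?addr0 // => l /negbTE ->; done.
rewrite (bigD1 i) //= eqxx scale1r big1 ?addr0 // => l /negbTE ->.
by rewrite scale0r.
Qed.

Lemma hull_sub n k k' (V : 'I_k -> 'rV[R]_n) (U : 'I_k' -> 'rV[R]_n) :
  (forall i, conv_hull U (V i)) -> conv_hull V `<=` conv_hull U.
Proof.
move=> VU x [w [w0 [w1 ->]]]; apply: conv_comb_mem => //.
exact: conv_hull_cvx.
Qed.


Lemma hull_vert n k (V : 'I_k -> 'rV[R]_n) x : conv_hull V x ->
  exists k' (U : 'I_k' -> 'rV[R]_n), (forall j, vert (conv_hull V) (U j)) /\ conv_hull U x.
Proof.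
elim: k V x => [|k IH] V x Hx.
  case: Hx => w [_ [w1 _]]; move: w1; rewrite big_ord0 => /eqP.
  by rewrite eq_sym oner_eq0.
have [allv|] := pselect (forall j, vert (conv_hull V) (V j)).
  by exists k.+1, V.
move=> /existsNP [j nv].
have [y [z [t [Py [Pz [t01 [Ej yz]]]]]]] : exists y z (t : R), conv_hull V y /\
    conv_hull V z /\ 0 < t < 1 /\ V j = t *: y + (1 - t) *: z /\ y <> z.
  apply: contrapT => H; apply: nv; split; first exact: delta_in_hull.
  move=> y z t Py Pz t01 E; apply: contrapT => yz; apply: H.
  by exists y, z, t.
pose V' := fun l : 'I_k => V (lift j l).
have VjV' : conv_hull V' (V j).
  case: Py => a [a0 [a1 ya]]; case: Pz => b [b0 [b1 zb]].
  move/andP: t01 => [t0 t1].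
  pose c := fun i => t * a i + (1 - t) * b i.
  have c0 : forall i, 0 <= c i.
    by move=> i; apply: addr_ge0; apply: mulr_ge0 => //; [exact: ltW|rewrite subr_ge0 ltW].
  have c1 : \sum_i c i = 1.
    by rewrite big_split /= -!mulr_sumr a1 b1 !mulr1 addrC subrK.
  have Ec : V j = \sum_i c i *: V i.
    rewrite Ej ya zb !scaler_sumr -big_split /=; apply: eq_bigr => i _.
    by rewrite !scalerA scalerDl.
  have aj1 : a j <= 1 by rewrite -a1 (bigD1 j) //= lerDl sumr_ge0.
  have bj1 : b j <= 1 by rewrite -b1 (bigD1 j) //= lerDl sumr_ge0.
  have cj1 : c j < 1.
    rewrite ltNge; apply/negP => cj.
    have aj : a j = 1.
      apply/eqP; rewrite eq_le aj1 /=; rewrite /c in cj.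
      have := a0 j; have := b0 j; nra.
    have bj : b j = 1.
      apply/eqP; rewrite eq_le bj1 /=; rewrite /c in cj.
      have := a0 j; have := b0 j; nra.
    have ya' : y = V j.
      have s0 : \sum_(i | i != j) a i = 0.
        by have := a1; rewrite (bigD1 j) //= aj; lra.
      rewrite ya (bigD1 j) //= aj scale1r big1 ?addr0 // => i ij.
      by rewrite (psumr_eq0P (fun i _ => a0 i) s0) // scale0r.
    have zb' : z = V j.
      have s0 : \sum_(i | i != j) b i = 0.
        by have := b1; rewrite (bigD1 j) //= bj; lra.
      rewrite zb (bigD1 j) //= bj scale1r big1 ?addr0 // => i ij.
      by rewrite (psumr_eq0P (fun i _ => b0 i) s0) // scale0r.
    by apply: yz; rewrite ya' zb'.
  pose d := 1 - c j.
  have d0 : 0 < d by rewrite /d subr_gt0.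
  have sd : \sum_(l < k) c (lift j l) = d.
    by move: c1; rewrite (bigD1_ord j) //= /d; lra.
  have E2 : \sum_(l < k) c (lift j l) *: V (lift j l) = d *: V j.
    rewrite /d scalerBl scale1r {1}Ec (bigD1_ord j) //=.
    by rewrite addrAC subrr add0r.
  exists (fun l => c (lift j l) / d); split.
    by move=> l; apply: divr_ge0 => //; exact: ltW.
  split; first by rewrite -mulr_suml sd mulfV // gt_eqF.
  rewrite (eq_bigr (fun l => d^-1 *: (c (lift j l) *: V' l))); last first.
    by move=> l _; rewrite scalerA mulrC.
  by rewrite -scaler_sumr E2 scalerA mulVf ?scale1r // gt_eqF.
have eqH : conv_hull V = conv_hull V'.
  apply/seteqP; split; apply: hull_sub => i.
    case: (unliftP j i) => [l ->|->]; last exact: VjV'.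
    exact: (delta_in_hull V' l).
  exact: (delta_in_hull V (lift j i)).
by rewrite eqH in Hx *; exact: IH.
Qed.

End Conv.

Section CZ.
Variable R : realType.

Lemma unit_box_row n1 n2 (a : 'rV[R]_n1) (b : 'rV[R]_n2) :
  unit_box (row_mx a b) <-> unit_box a /\ unit_box b.
Proof.
split.
  by move=> H; split => j; [have := H (lshift n2 j); rewrite row_mxEl
                          | have := H (rshift n1 j); rewrite row_mxEr].
move=> [Ha Hb] j; rewrite -(splitK j); case: (fintype.split j) => j' /=.
  by rewrite row_mxEl.
by rewrite row_mxEr.
Qed.

Lemma cz_gen_int n m (X : set 'rV[R]_n) (M : 'M[R]_(n, m)) W :
  is_CZ X -> is_CZ W -> is_CZ (gen_int X M W).
Proof.
move=> [n1 [k1 [G1 [c1 [A1 [b1 ->]]]]]] [n2 [k2 [G2 [c2 [A2 [b2 ->]]]]]].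
exists (n1 + n2)%N, (k1 + k2 + m)%N, (col_mx G1 0), c1,
  (row_mx (row_mx (col_mx A1 0) (col_mx 0 A2)) (col_mx (G1 *m M) (- G2))),
  (row_mx (row_mx b1 b2) (c2 - c1 *m M)).
apply/seteqP; split => x /=.
  move=> [[xi1 [u1 [e1 ->]]] [xi2 [u2 [e2 E]]]].
  exists (row_mx xi1 xi2); split; first by apply/unit_box_row.
  rewrite !mul_mx_row !mul_row_col !mulmx0 addr0 add0r mulmxN mulmxA e1 e2.
  split.
    have E' : xi1 *m G1 *m M = xi2 *m G2 + c2 - c1 *m M by rewrite -E mulmxDl addrK.
    by rewrite E' addrAC [xi2 *m G2 + c2]addrC addrK.
  by rewrite addr0.
move=> [xi [u [eA ->]]].
move: u eA; rewrite -[xi]hsubmxK; set xi1 := lsubmx xi; set xi2 := rsubmx xi.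
move=> /unit_box_row [u1 u2].
rewrite !mul_mx_row !mul_row_col !mulmx0 addr0 add0r mulmxN mulmxA.
move=> /eq_row_mx [/eq_row_mx [e1 e2] e3].
rewrite ?addr0.
split; first by exists xi1.
exists xi2; split => //; split => //.
have e4 : xi1 *m G1 *m M = c2 - c1 *m M + xi2 *m G2 by rewrite -e3 subrK.
by rewrite mulmxDl e4 addrAC subrK addrC.
Qed.

End CZ.


Section Extra.
Variable R : realType.

Lemma zono_neg_CZ n ng (G : 'M[R]_(ng, n)) c p :
  is_CZ (msum_pt p (neg_set (zono_set G c))).
Proof.
exists ng, 0%N, (- G), (p - c), 0, 0.
apply/seteqP; split => z /=.
  move=> [_ [y'' [xi [u ->]] <-] <-].
  exists xi; split => //; split; first by rewrite mulmx0.
  by rewrite mulmxN opprD addrCA.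
move=> [xi [u [_ ->]]].
exists (- (xi *m G + c)); first by exists (xi *m G + c) => //; exists xi.
by rewrite mulmxN opprD addrCA.
Qed.

Lemma box_zono m (em ep y : 'rV[R]_m) : (forall j, em 0 j <= y 0 j <= ep 0 j) ->
  zono_set (diag_mx (2^-1 *: (ep - em))) (2^-1 *: (em + ep)) y.
Proof.
move=> H.
exists (\row_j (if ep 0 j - em 0 j == 0 then 0 else
   (y 0 j - 2^-1 * (em 0 j + ep 0 j)) / (2^-1 * (ep 0 j - em 0 j)))).
split.
  move=> j; rewrite mxE; case: ifP => [_|/negbT h]; first by lra.
  have := H j => /andP [h1 h2].
  have d0 : 0 < 2^-1 * (ep 0 j - em 0 j).
    apply: mulr_gt0; first by rewrite invr_gt0.
    by rewrite lt_neqAle eq_sym h /= subr_ge0 (le_trans h1 h2).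
  by rewrite ler_pdivlMr // ler_pdivrMr //; apply/andP; split; lra.
apply/matrixP => i j; rewrite mul_mx_diag !mxE (ord1 i).
case: ifP => [/eqP h|/negbT h].
  have := H j => /andP [h1 h2]; lra.
by rewrite divfK ?subrK // mulf_neq0 // invr_eq0.
Qed.

Lemma linz_aff n m (f : 'rV[R]_n -> 'rV[R]_m) xbar y z t i :
  linz f xbar (t *: y + (1 - t) *: z) 0 i =
  t * linz f xbar y 0 i + (1 - t) * linz f xbar z 0 i.
Proof.
by rewrite /linz !mulmxBl mulmxDl -!scalemxAl !mxE; lra.
Qed.

Lemma linzE n m (f : 'rV[R]_n -> 'rV[R]_m) xbar x i :
  linz f xbar x 0 i = f xbar 0 i + ((x - xbar) *m 'J f xbar) 0 i.
Proof. by rewrite /linz mxE. Qed.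

Lemma comb_ge (em t p q r pa qa ra pb qb rb : R) : 0 <= t <= 1 ->
  p = t * pa + (1 - t) * pb -> r = t * ra + (1 - t) * rb ->
  q <= t * qa + (1 - t) * qb -> em <= pa - qa - ra -> em <= pb - qb - rb ->
  em <= p - q - r.
Proof.
move=> /andP [t0 t1] -> -> hq ha hb.
have t1' : 0 <= 1 - t by rewrite subr_ge0.
have := ler_wpM2l t0 ha; have := ler_wpM2l t1' hb; lra.
Qed.

Lemma comb_le (ep t p q r pa qa ra pb qb rb : R) : 0 <= t <= 1 ->
  p <= t * pa + (1 - t) * pb -> q = t * qa + (1 - t) * qb ->
  r = t * ra + (1 - t) * rb -> pa - qa - ra <= ep -> pb - qb - rb <= ep ->
  p - q - r <= ep.
Proof.
move=> /andP [t0 t1] hp -> -> ha hb.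
have t1' : 0 <= 1 - t by rewrite subr_ge0.
have := ler_wpM2l t0 ha; have := ler_wpM2l t1' hb; lra.
Qed.

Lemma fin_low (em L GA GB LG : R) :
  em <= L - GB - LG -> L <= GA -> GA - GB = 0 -> em <= - LG.
Proof. lra. Qed.

Lemma fin_up (ep GA LB LG GB : R) :
  GA - LB - LG <= ep -> LB <= GB -> GA - GB = 0 -> - LG <= ep.
Proof. lra. Qed.

End Extra.

Theorem corollary1 (R : realType) (n mc : nat)
  (Xbreve XF : set 'rV[R]_n)
  (g ga gb : 'rV[R]_n -> 'rV[R]_mc) (P : set 'rV[R]_n) (xbar : 'rV[R]_n)
  (em ep : 'rV[R]_mc) :
  is_CZ Xbreve -> is_CZ XF ->
  is_polytope P ->
  gen_int Xbreve 1%:M XF `<=` P ->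
  (forall x, P x -> g x = ga x - gb x) ->
  (forall x, P x -> differentiable ga x) ->
  (forall x, P x -> differentiable gb x) ->
  convex_on_cw P ga -> convex_on_cw P gb ->
  P xbar ->
  (forall i : 'I_mc, is_min_over (vert P)
      (fun x => linz ga xbar x 0 i - gb x 0 i - linz g xbar x 0 i) (em 0 i)) ->
  (forall i : 'I_mc, is_max_over (vert P)
      (fun x => ga x 0 i - linz gb xbar x 0 i - linz g xbar x 0 i) (ep 0 i)) ->
  let Xcheck := gen_int Xbreve 1%:M XF in
  let H := 'J g xbar in
  let Rk := zono_set (diag_mx (2^-1 *: (ep - em))) (2^-1 *: (em + ep)) in
  let Ck := msum_pt (- g xbar + xbar *m H) (neg_set Rk) in
  let Xtilde := gen_int Xcheck H Ck in
  [set x | Xcheck x /\ g x = 0] `<=` Xtilde /\ is_CZ Xtilde.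
Proof.
move=> hXb hXF [k [V PV]] sub gab dga dgb cga cgb Pxb hmin hmax Xcheck H Rk Ck Xtilde.
split; last first.
  apply: cz_gen_int; first exact: cz_gen_int.
  exact: zono_neg_CZ.
move=> x [Xx gx0]; split => //.
have Px := sub x Xx.
have cP : cvx P by rewrite PV; exact: conv_hull_cvx.
pose y := - linz g xbar x.
have bnd : forall j, em 0 j <= y 0 j <= ep 0 j.
  move=> j.
  have := Px; rewrite {1}PV => /hull_vert [k' [U [vU [w [w0 [w1 xE]]]]]].
  have gj : ga x 0 j - gb x 0 j = 0.
    by have := gab x Px; rewrite gx0 => /matrixP /(_ 0 j); rewrite !mxE => <-.
  have ta : linz ga xbar x 0 j <= ga x 0 j.
    by rewrite linzE; exact: (@tangent_le _ _ _ P ga xbar x j cga Pxb Px (dga _ Pxb)).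
  have tb : linz gb xbar x 0 j <= gb x 0 j.
    by rewrite linzE; exact: (@tangent_le _ _ _ P gb xbar x j cgb Pxb Px (dgb _ Pxb)).
  have yj : y 0 j = - linz g xbar x 0 j by rewrite mxE.
  apply/andP; split.
  - pose S := fun z => P z /\ em 0 j <= linz ga xbar z 0 j - gb z 0 j - linz g xbar z 0 j.
    have cS : cvx S.
      move=> a b t [Pa ha] [Pb hb] /andP [t0 t1].
      split; first by apply: cP => //; rewrite t0 t1.
      have e1 := linz_aff ga xbar a b t j; have e2 := linz_aff g xbar a b t j.
      have := cgb j a b t Pa Pb; rewrite t0 t1 => /(_ isT) cb.
      by apply: (comb_ge _ e1 e2 cb ha hb); rewrite t0 t1.
    have SU : forall i, S (U i).
      move=> i; have := vU i; rewrite -PV => vi; split; first by case: vi.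
      by have [_] := hmin j; apply.
    have := conv_comb_mem cS SU w0 w1; rewrite -xE => -[_ h].
    by rewrite yj; exact: (fin_low h ta gj).
  - pose S := fun z => P z /\ ga z 0 j - linz gb xbar z 0 j - linz g xbar z 0 j <= ep 0 j.
    have cS : cvx S.
      move=> a b t [Pa ha] [Pb hb] /andP [t0 t1].
      split; first by apply: cP => //; rewrite t0 t1.
      have e1 := linz_aff gb xbar a b t j; have e2 := linz_aff g xbar a b t j.
      have := cga j a b t Pa Pb; rewrite t0 t1 => /(_ isT) ca.
      by apply: (comb_le _ ca e1 e2 ha hb); rewrite t0 t1.
    have SU : forall i, S (U i).
      move=> i; have := vU i; rewrite -PV => vi; split; first by case: vi.
      by have [_] := hmax j; apply.
    have := conv_comb_mem cS SU w0 w1; rewrite -xE => -[_ h].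
    by rewrite yj; exact: (fin_up h tb gj).
exists (- y); first by exists y => //; exact: box_zono.
by rewrite /y opprK /linz mulmxBl addrACA addNr add0r addrC subrK.
Qed.
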